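(* Let $q$ be a prime power. There exists a $2$-code of $\mathcal S_{3,q}$ of size $(q^2-1)(q^2+q+1)+1$.
   Context: $\mathcal S_{3,q}$ is the set of $3\times 3$ symmetric matrices over ${\rm GF}(q)$, with rank distance $d_r(A,B)={\rm rk}(A-B)$. A $2$-code is a non-empty subset whose minimum distance $\min\{{\rm rk}(c_1-c_2): c_1\neq c_2\}$ equals $2$. *)

(* Defs.v *)
From mathcomp Require Import all_boot all_order all_algebra all_field.
Set Implicit Arguments. Unset Strict Implicit. Unset Printing Implicit Defensive.
Import GRing.Theory.
Local Open Scope ring_scope.

Definition symmetric_mx (F : fieldType) (n : nat) (A : 'M[F]_n) : bool :=
  A^T == A.

Definition rank_dist (F : fieldType) (n : nat) (A B : 'M[F]_n) : nat :=
  \rank (A - B).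

Definition is_d_code (F : finFieldType) (n d : nat) (C : {set 'M[F]_n}) : Prop :=
  [/\ C != set0,
      (forall A, A \in C -> symmetric_mx A),
      (forall A B, A \in C -> B \in C -> A != B -> (d <= rank_dist A B)%N) &
      exists A B, [/\ A \in C, B \in C, A != B & rank_dist A B = d]].

(* Main.v *)
Require Import Defs.
From mathcomp Require Import all_boot all_order all_algebra all_field.
From mathcomp Require Import ring zify.
Set Implicit Arguments. Unset Strict Implicit. Unset Printing Implicit Defensive.
Import GRing.Theory.
Local Open Scope ring_scope.

Definition mkM {F : finFieldType} m n (s : seq (seq F)) : 'M[F]_(m,n) :=
  \matrix_(k < m, l < n) nth 0 (nth [::] s k) l.

Definition Ity (F : finFieldType) := (F * F + (F + unit))%type.

Definition Pmx {F : finFieldType} (i : Ity F) : 'M[F]_(3,2) :=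
  match i with
  | inl (a, b) => mkM 3 2 [:: [:: -a; -b]; [:: 1; 0]; [:: 0; 1]]
  | inr (inl a) => mkM 3 2 [:: [:: 1; 0]; [:: 0; -a]; [:: 0; 1]]
  | inr (inr _) => mkM 3 2 [:: [:: 1; 0]; [:: 0; 1]; [:: 0; 0]]
  end.

Definition Lmx {F : finFieldType} (i : Ity F) : 'M[F]_(2,3) :=
  match i with
  | inl _ => mkM 2 3 [:: [:: 0; 1; 0]; [:: 0; 0; 1]]
  | inr (inl _) => mkM 2 3 [:: [:: 1; 0; 0]; [:: 0; 0; 1]]
  | inr (inr _) => mkM 2 3 [:: [:: 1; 0; 0]; [:: 0; 1; 0]]
  end.

Definition nvec {F : finFieldType} (i : Ity F) : 'cV[F]_3 :=
  match i with
  | inl (a, b) => mkM 3 1 [:: [:: 1]; [:: a]; [:: b]]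
  | inr (inl a) => mkM 3 1 [:: [:: 0]; [:: 1]; [:: a]]
  | inr (inr _) => mkM 3 1 [:: [:: 0]; [:: 0]; [:: 1]]
  end.

Lemma LP1 (F : finFieldType) (i : Ity F) : Lmx i *m Pmx i = 1%:M.
Proof.
apply/matrixP => -[[|[|k]] Hk] -[[|[|l]] Hl] //;
case: i => [[a b]|[a|[]]];
rewrite !mxE !big_ord_recl !big_ord0 !mxE /=; 
rewrite ?mulr0 ?mul0r ?mulr1 ?mul1r ?addr0 ?add0r //.
Qed.

Lemma Pn0 (F : finFieldType) (i : Ity F) : (Pmx i)^T *m nvec i = 0.
Proof.
apply/matrixP => -[[|[|k]] Hk] -[[|l] Hl] //;
case: i => [[a b]|[a|[]]];
rewrite !mxE !big_ord_recl !big_ord0 !mxE /=;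
rewrite ?mulr0 ?mul0r ?mulr1 ?mul1r ?addr0 ?add0r ?mulN1r ?mulNr ?addNr //.
Qed.
Lemma Pn_eq (F : finFieldType) (i j : Ity F) : (Pmx j)^T *m nvec i = 0 -> i = j.
Proof.
move/matrixP => H.
have H0 := H 0 0; have H1 := H (@Ordinal 2 1 isT) 0.
move: H0 H1; clear H.
case: i => [[a b]|[a|[]]]; case: j => [[a' b']|[a'|[]]];
rewrite !mxE !big_ord_recl !big_ord0 !mxE /=;
rewrite ?mulr0 ?mul0r ?mulr1 ?mul1r ?addr0 ?add0r ?mulN1r ?mulNr //;
try (by move=> /eqP; rewrite oner_eq0);
try (by move=> _ /eqP; rewrite oner_eq0).
- by move=> /eqP; rewrite addrC subr_eq0 => /eqP -> /eqP; rewrite addrC subr_eq0 => /eqP ->.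
- by move=> _ /eqP; rewrite addrC subr_eq0 => /eqP ->.
Qed.

Definition Mst {F : finFieldType} (alpha s t : F) : 'M[F]_2 :=
  mkM 2 2 [:: [:: t; s]; [:: s; s + alpha * t]].

Lemma det_nz (F : finFieldType) (alpha s t : F) :
  (forall x : F, x * x - x != alpha) -> (s, t) != (0, 0) ->
  t * (s + alpha * t) - s * s != 0.
Proof.
move=> ha nst; apply/eqP => hd.
have [t0|t0] := eqVneq t 0.
  move: hd; rewrite t0 mul0r sub0r => /eqP; rewrite oppr_eq0 mulf_eq0 orbb => /eqP s0.
  by move: nst; rewrite s0 t0 eqxx.
apply: (negP (ha (s / t))); apply/eqP.
have -> : s / t * (s / t) - s / t = alpha - (t * (s + alpha * t) - s * s) / (t * t).
  by field.
by rewrite hd mul0r subr0.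
Qed.

Lemma Mst_unit (F : finFieldType) (alpha s t : F) :
  (forall x : F, x * x - x != alpha) -> (s, t) != (0, 0) ->
  Mst alpha s t \in unitmx.
Proof.
move=> ha nst; have hd := det_nz ha nst.
set d := t * (s + alpha * t) - s * s in hd.
suff /mulmx1_unit[] : Mst alpha s t *m (d^-1 *: mkM 2 2 [:: [:: s + alpha * t; -s]; [:: -s; t]]) = 1%:M by [].
apply/matrixP => -[[|[|k]] Hk] -[[|[|l]] Hl] //;
rewrite !mxE !big_ord_recl !big_ord0 !mxE /= /d; field; exact: hd.
Qed.

Definition Emx {F : finFieldType} (alpha : F) (i : Ity F) (st : F * F) : 'M[F]_3 :=
  Pmx i *m Mst alpha st.1 st.2 *m (Pmx i)^T.

Lemma Mst_sym (F : finFieldType) (alpha s t : F) : (Mst alpha s t)^T = Mst alpha s t.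
Proof. by apply/matrixP => -[[|[|k]] Hk] -[[|[|l]] Hl] //; rewrite !mxE. Qed.

Lemma Emx_sym (F : finFieldType) (alpha : F) i st : (Emx alpha i st)^T = Emx alpha i st.
Proof. by rewrite /Emx !trmx_mul trmxK Mst_sym mulmxA. Qed.

Lemma Emx_n (F : finFieldType) (alpha : F) i st : Emx alpha i st *m nvec i = 0.
Proof. by rewrite /Emx -mulmxA Pn0 mulmx0. Qed.

Lemma LE (F : finFieldType) (alpha : F) i st p (x : 'M[F]_(3, p)) :
  Lmx i *m (Emx alpha i st *m x) = Mst alpha st.1 st.2 *m ((Pmx i)^T *m x).
Proof. by rewrite /Emx !mulmxA LP1 mul1mx. Qed.

Lemma Emx_ker (F : finFieldType) (alpha : F) i (st : F * F) (x : 'cV[F]_3) :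
  (forall x : F, x * x - x != alpha) -> st != (0, 0) ->
  Emx alpha i st *m x = 0 -> (Pmx i)^T *m x = 0.
Proof.
case: st => s t ha nst hx.
have hu := Mst_unit ha nst.
have := LE alpha i (s, t) x; rewrite hx mulmx0 /= => /esym h.
by rewrite -(mulKmx hu ((Pmx i)^T *m x)) h mulmx0.
Qed.

Lemma Emx_rank (F : finFieldType) (alpha : F) i (st : F * F) :
  (forall x : F, x * x - x != alpha) -> st != (0, 0) ->
  (2 <= \rank (Emx alpha i st))%N.
Proof.
case: st => s t ha nst.
have hu := Mst_unit ha nst.
have e : Lmx i *m Emx alpha i (s, t) *m (Lmx i)^T = Mst alpha s t.
  by rewrite /Emx !mulmxA LP1 mul1mx -mulmxA -trmx_mul LP1 trmx1 mulmx1.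
have := mxrankM_maxl (Lmx i *m Emx alpha i (s, t)) (Lmx i)^T.
rewrite e (mxrank_unit hu) => h; apply: (leq_trans h).
exact: mxrankM_maxr.
Qed.

Lemma Emx_rank_le (F : finFieldType) (alpha : F) i st :
  (\rank (Emx alpha i st) <= 2)%N.
Proof. by apply: leq_trans (mxrankM_maxr _ (Pmx i)^T) (rank_leq_row _). Qed.

Lemma Emx_lin (F : finFieldType) (alpha : F) i (st st' : F * F) :
  Emx alpha i st - Emx alpha i st' = Emx alpha i (st.1 - st'.1, st.2 - st'.2).
Proof.
rewrite /Emx -mulmxBl -mulmxBr /=; congr (_ *m _ *m _).
apply/matrixP => -[[|[|k]] Hk] -[[|[|l]] Hl] //; rewrite !mxE /=;
by ring.
Qed.

Lemma Emx_inj (F : finFieldType) (alpha : F) i j (st st' : F * F) :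
  (forall x : F, x * x - x != alpha) -> st != (0, 0) -> st' != (0, 0) ->
  Emx alpha i st = Emx alpha j st' -> i = j /\ st = st'.
Proof.
move=> ha n1 n2 e.
have ij : i = j.
  apply: Pn_eq; apply: (Emx_ker ha n2).
  by rewrite -e Emx_n.
split=> //; subst j.
have := LE alpha i st (Lmx i)^T; rewrite e LE -trmx_mul LP1 trmx1 !mulmx1.
case: st e n1 => s t; case: st' n2 => s' t' _ _ _ /= /matrixP h.
have h1 := h 0 0; have h2 := h 0 (@Ordinal 2 1 isT).
by move: h1 h2; rewrite !mxE /= => -> ->.
Qed.

Lemma rank1_fact (F : fieldType) m n (D : 'M[F]_(m, n)) :
  (\rank D <= 1)%N -> exists (C : 'M[F]_(m, 1)) (R : 'M[F]_(1, n)), D = C *m R.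
Proof.
case: (ltngtP (\rank D) 1) => // [|h _].
  rewrite ltnS leqn0 mxrank_eq0 => /eqP -> _.
  by exists 0, 0; rewrite mul0mx.
move: (col_base D) (row_base D) (mulmx_base D); rewrite h => C R e.
by exists C, R.
Qed.

Lemma exists_alpha (F : finFieldType) : exists alpha : F, forall x : F, x * x - x != alpha.
Proof.
case/boolP: [exists a : F, [forall x : F, x * x - x != a]].
  by case/existsP => a /forallP h; exists a.
rewrite negb_exists => /forallP h.
have imT : [set x * x - x | x in [set: F]] = [set: F].
  apply/setP => a; rewrite in_setT.
  move: (h a); rewrite negb_forall => /existsP [x]; rewrite negbK => /eqP <-.
  by apply/imsetP; exists x; rewrite ?in_setT.
have : #|[set x * x - x | x in [set: F]]| == #|[set: F]| by rewrite imT.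
move/imset_injP => inj.
have := inj 0 1 (in_setT _) (in_setT _).
rewrite mul0r subr0 mul1r subrr => /(_ erefl) /eqP.
by rewrite eq_sym oner_eq0.
Qed.

Lemma mx11_mul0 (F : fieldType) (X Y : 'M[F]_1) : X *m Y = 0 -> X = 0 \/ Y = 0.
Proof.
move/matrixP => /(_ 0 0); rewrite !mxE big_ord1 => /eqP; rewrite mulf_eq0 => /orP[] /eqP h.
  by left; apply/matrixP => a b; rewrite !ord1 h mxE.
by right; apply/matrixP => a b; rewrite !ord1 h mxE.
Qed.

Definition NZ (F : finFieldType) : {set F * F} := [set st | st != (0, 0)].

Definition code (F : finFieldType) (alpha : F) : {set 'M[F]_3} :=
  0 |: [set Emx alpha p.1 p.2 | p in setX [set: Ity F] (NZ F)].

Lemma in_code (F : finFieldType) (alpha : F) (A : 'M[F]_3) :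
  A \in code alpha -> A = 0 \/ exists i st, st != (0, 0) /\ A = Emx alpha i st.
Proof.
case/setU1P => [->|/imsetP [[i st]]]; first by left.
by rewrite in_setX in_setT inE /= => nst ->; right; exists i, st.
Qed.

Lemma diff_ij (F : finFieldType) (alpha : F) i j st st' :
  (forall x : F, x * x - x != alpha) -> st != (0, 0) -> st' != (0, 0) -> i != j ->
  (2 <= \rank (Emx alpha i st - Emx alpha j st')%R)%N.
Proof.
move=> ha n1 n2 nij.
rewrite leqNgt; apply/negP; rewrite ltnS => /rank1_fact [C [R eD]].
set A := Emx alpha i st in eD; set B := Emx alpha j st' in eD.
have An : A *m nvec i = 0 by exact: Emx_n.
have Bn : B *m nvec j = 0 by exact: Emx_n.
have nB : (nvec j)^T *m B = 0.
  by apply: trmx_inj; rewrite trmx_mul trmxK /B Emx_sym -/B Bn trmx0.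
have key : ((nvec j)^T *m C) *m (R *m nvec i) = 0.
  by rewrite mulmxA -(mulmxA _ C) -eD mulmxBr mulmxBl -mulmxA An mulmx0 nB mul0mx subr0.
case/mx11_mul0: key => [a0|b0].
  have Dn : (A - B) *m nvec j = 0.
    have -> : A - B = (A - B)^T by rewrite linearB /= /A /B !Emx_sym.
    by rewrite eD trmx_mul -mulmxA -[C^T *m _]trmxK trmx_mul trmxK a0 trmx0 mulmx0.
  have : A *m nvec j = 0.
    by have := Dn; rewrite mulmxBl Bn subr0.
  move/(Emx_ker ha n1)/Pn_eq => e.
  by move: nij; rewrite e eqxx.
have Dn : (A - B) *m nvec i = 0 by rewrite eD -mulmxA b0 mulmx0.
have : B *m nvec i = 0.
  by move: Dn; rewrite mulmxBl An sub0r => /eqP; rewrite oppr_eq0 => /eqP.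
move/(Emx_ker ha n2)/Pn_eq => e.
by move: nij; rewrite e eqxx.
Qed.

Lemma code_dist (F : finFieldType) (alpha : F) (A B : 'M[F]_3) :
  (forall x : F, x * x - x != alpha) ->
  A \in code alpha -> B \in code alpha -> A != B -> (2 <= \rank (A - B)%R)%N.
Proof.
move=> ha /in_code hA /in_code hB nAB.
case: hA => [A0|[i [st [n1 eA]]]]; case: hB => [B0|[j [st' [n2 eB]]]].
- by move: nAB; rewrite A0 B0 eqxx.
- by rewrite A0 eB sub0r mxrank_opp; exact: Emx_rank.
- by rewrite B0 eA subr0; exact: Emx_rank.
have [eij|nij] := eqVneq i j; last by rewrite eA eB; exact: diff_ij.
subst j; rewrite eA eB Emx_lin; apply: Emx_rank => //.
apply: contraNneq nAB; case: st st' {n1 n2} eA eB => s t [s' t'] -> -> /= [].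
by move=> /eqP; rewrite subr_eq0 => /eqP -> /eqP; rewrite subr_eq0 => /eqP ->.
Qed.


Lemma card_NZ (F : finFieldType) : #|NZ F| = (#|F| * #|F|).-1.
Proof.
have -> : NZ F = [set~ (0, 0)] by apply/setP => x; rewrite !inE.
by rewrite cardsC1 card_prod.
Qed.

Lemma inNZ (F : finFieldType) (st : F * F) : (st \in NZ F) = (st != (0, 0)).
Proof. by rewrite inE. Qed.

Lemma card_code (F : finFieldType) (alpha : F) :
  (forall x : F, x * x - x != alpha) ->
  #|code alpha| = (1 + (#|F| * #|F| + (#|F| + 1)) * (#|F| * #|F|).-1)%N.
Proof.
move=> ha; rewrite /code cardsU1.
have -> : (0 : 'M[F]_3) \notin [set Emx alpha p.1 p.2 | p in setX [set: Ity F] (NZ F)].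
  apply/imsetP => -[[i st]]; rewrite in_setX /= inNZ in_setT => nst e.
  by have := Emx_rank i ha nst; rewrite -e mxrank0.
rewrite card_in_imset; last first.
  move=> [i st] [j st']; rewrite !in_setX /= !inNZ !in_setT => n1 n2 e.
  by have [-> ->] := Emx_inj ha n1 n2 e.
by rewrite cardsX cardsT card_NZ /Ity card_sum card_prod card_sum card_unit.
Qed.

Theorem mainTheorem8 (F : finFieldType) :
  let q := #|F| in
  exists C : {set 'M[F]_3},
    is_d_code 2 C /\ #|C| = ((q ^ 2 - 1) * (q ^ 2 + q + 1) + 1)%N.
Proof.
move=> q.
have [alpha ha] := exists_alpha F.
have nst : ((0 : F), (1 : F)) != (0, 0).
  by apply/eqP => -[] /eqP; rewrite oner_eq0.
set i0 : Ity F := inr (inr tt).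
have hE : Emx alpha i0 (0, 1) \in code alpha.
  apply/setU1P; right; apply/imsetP; exists (i0, (0, 1)) => //.
  by rewrite in_setX /= inNZ in_setT.
have rk : \rank (Emx alpha i0 (0, 1)) = 2.
  by apply/eqP; rewrite eqn_leq Emx_rank_le Emx_rank.
exists (code alpha); split.
  split.
  - by apply/set0Pn; exists 0; rewrite setU11.
  - move=> A /in_code [->|[i [st [_ ->]]]]; rewrite /symmetric_mx.
      by rewrite trmx0.
    by rewrite Emx_sym.
  - by move=> A B hA hB nAB; rewrite /rank_dist; exact: code_dist.
  - exists (Emx alpha i0 (0, 1)), 0; split => //; first by rewrite setU11.
      by apply/eqP => e; move: rk; rewrite e mxrank0.
    by rewrite /rank_dist subr0.
rewrite card_code // -/q.
have q0 : (0 < q)%N by apply/card_gt0P; exists 0.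
rewrite -subn1; nia.
Qed.
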